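(* Let ${\cal H}\subset{\cal H}_0$, ${\mathcal D}$, $b$, $\mu_\ell^{-1}$, $\epsilon_\ell$, $a_\ell$ ($\ell=1,2$) be as in the context (the standing assumptions there hold), and let ${\cal H}_N\subset{\cal H}$ be a finite-dimensional subspace. Suppose that, with $0<C_{{\rm dis},N,1}<\infty$, $$\inf_{u_N\in{\cal H}_N\setminus\{0\}}\sup_{v_N\in{\cal H}_N\setminus\{0\}}\frac{|a_1(u_N,v_N)|}{\|u_N\|_{{\cal H}}\|v_N\|_{{\cal H}}}\ge\frac{1}{C_{{\rm dis},N,1}},$$ for all $v_N\in{\cal H}_N\setminus\{0\}$, $\sup_{u_N\in{\cal H}_N\setminus\{0\}}|a_1(u_N,v_N)|>0$, and $$\Big(\|\mu_1^{-1}-\mu_2^{-1}\|_{{\cal H}_0\to{\cal H}_0}+\|\epsilon_1-\epsilon_2\|_{{\cal H}_0\to{\cal H}_0}\Big)C_{{\rm dis},N,1}\le\tfrac12.$$ Then $$\inf_{u_N\in{\cal H}_N\setminus\{0\}}\sup_{v_N\in{\cal H}_N\setminus\{0\}}\frac{|a_2(u_N,v_N)|}{\|u_N\|_{{\cal H}}\|v_N\|_{{\cal H}}}\ge\frac{1}{2C_{{\rm dis},N,1}}$$ and, for all $v_N\in{\cal H}_N\setminus\{0\}$, $\sup_{u_N\in{\cal H}_N\setminus\{0\}}|a_2(u_N,v_N)|>0$.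
   Context: Standing assumptions: ${\cal H}\subset{\cal H}_0$ are complex Hilbert spaces with $\|v\|_{{\cal H}_0}\le\|v\|_{{\cal H}}$ for $v\in{\cal H}$, and ${\cal H}_0$ is identified with its dual so that ${\cal H}\subset{\cal H}_0\subset{\cal H}^*$. ${\mathcal D}:{\cal H}\to{\cal H}_0$ is linear with $\|{\mathcal D}\|_{{\cal H}\to{\cal H}_0}\le 1$; $b(\cdot,\cdot)$ is a continuous sesquilinear form on ${\cal H}$; for $\ell=1,2$, $\mu_\ell^{-1}:{\cal H}_0\to{\cal H}_0$ and $\epsilon_\ell:{\cal H}_0\to{\cal H}_0$ are bounded linear operators, and $a_\ell(u,v):=(\mu_\ell^{-1}{\mathcal D}u,{\mathcal D}v)_{{\cal H}_0}+b(u,v)-(\epsilon_\ell u,v)_{{\cal H}_0}$. For $\ell=1,2$ there exist $C_{{\rm G1},\ell},C_{{\rm G2},\ell}>0$ with $|a_\ell(v,v)+C_{{\rm G2},\ell}\|v\|_{{\cal H}_0}^2|\ge C_{{\rm G1},\ell}\|v\|_{{\cal H}}^2$ for all $v\in{\cal H}$. *)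

(* Defs.v *)
From mathcomp Require Import all_boot all_order all_algebra.
From mathcomp Require Import all_classical all_reals all_analysis.
From mathcomp Require Export complex.
Import Order.TTheory GRing.Theory Num.Theory.

Set Implicit Arguments.
Unset Strict Implicit.
Unset Printing Implicit Defensive.

Local Open Scope ring_scope.
Local Open Scope classical_set_scope.

Section Defs.
Variable R : realType.
Local Notation C := R[i].

Definition cabs (z : C) : R := Normc.normc z.

Definition rC (x : R) : C := Complex x 0.

Definition inner_product (V : lmodType C) (ip : V -> V -> C) : Prop :=
  [/\ forall (a : C) (u v w : V), ip (a *: u + v) w = a * ip u w + ip v w,
      forall u v : V, ip v u = conjc (ip u v),
      forall v : V, 0 <= ip v v &
      forall v : V, ip v v = 0 -> v = 0].

Definition ipnorm (V : lmodType C) (ip : V -> V -> C) (v : V) : R :=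
  Num.sqrt (complex.Re (ip v v)).

Definition ip_complete (V : lmodType C) (ip : V -> V -> C) : Prop :=
  forall u : nat -> V,
    (forall e : R, 0 < e -> exists N : nat, forall m n : nat,
        (N <= m)%N -> (N <= n)%N -> ipnorm ip (u m - u n) < e) ->
    exists l : V, forall e : R, 0 < e -> exists N : nat, forall n : nat,
        (N <= n)%N -> ipnorm ip (u n - l) < e.

Definition hilbert (V : lmodType C) (ip : V -> V -> C) : Prop :=
  inner_product ip /\ ip_complete ip.

Definition bounded_op (V W : lmodType C) (ipV : V -> V -> C) (ipW : W -> W -> C)
  (A : V -> W) : Prop :=
  exists M : R, forall v : V, ipnorm ipW (A v) <= M * ipnorm ipV v.

Definition opnorm (V W : lmodType C) (ipV : V -> V -> C) (ipW : W -> W -> C)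
  (A : V -> W) : R :=
  sup [set ipnorm ipW (A v) / ipnorm ipV v | v in [set v : V | v != 0]].

Definition cont_sesquilinear (V : lmodType C) (ip : V -> V -> C)
  (b : V -> V -> C) : Prop :=
  [/\ forall (a : C) (u u' v : V), b (a *: u + u') v = a * b u v + b u' v,
      forall (a : C) (u v v' : V), b u (a *: v + v') = conjc a * b u v + b u v' &
      exists M : R, forall u v : V, cabs (b u v) <= M * ipnorm ip u * ipnorm ip v].

(* a(u,v) := (mu^{-1} D u, D v)_{H0} + b(u,v) - (eps u, v)_{H0},
   where iota : H -> H0 is the inclusion *)
Definition aform (V V0 : lmodType C) (ip0 : V0 -> V0 -> C) (iota : V -> V0)
  (D : V -> V0) (b : V -> V -> C) (muinv eps : V0 -> V0) (u v : V) : C :=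
  ip0 (muinv (D u)) (D v) + b u v - ip0 (eps (iota u)) (iota v).

Definition findim_subspace (V : lmodType C) (HN : set V) : Prop :=
  exists s : seq V, HN = [set v | exists c : 'I_(size s) -> C,
                                   v = \sum_(i < size s) c i *: s`_i].

Definition nonzero_in (V : lmodType C) (HN : set V) : set V :=
  [set v | HN v /\ v != 0].

Definition infsup (V : lmodType C) (ip : V -> V -> C) (HN : set V)
  (a : V -> V -> C) : \bar R :=
  ereal_inf [set ereal_sup [set (cabs (a u v) / (ipnorm ip u * ipnorm ip v))%:E
                           | v in nonzero_in HN]
            | u in nonzero_in HN].

Definition adjoint_nondeg (V : lmodType C) (HN : set V) (a : V -> V -> C) : Prop :=
  forall v : V, nonzero_in HN v ->
    (0 < ereal_sup [set (cabs (a u v))%:E | u in nonzero_in HN])%E.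

End Defs.

(* Main.v *)
Require Import Defs.
From mathcomp Require Import all_boot all_order all_algebra.
From mathcomp Require Import all_classical all_reals all_analysis.
From mathcomp Require Import complex.
From mathcomp Require Import ring lra.
Import Order.TTheory GRing.Theory Num.Theory.
Local Open Scope ring_scope.
Local Open Scope classical_set_scope.


Section IP.
Context {R : realType}.
Local Notation C := R[i].
Context {V : lmodType C} {ip : V -> V -> C}.
Hypothesis Hip : inner_product ip.

Lemma ipDZl a u v w : ip (a *: u + v) w = a * ip u w + ip v w.
Proof. by case: Hip => h1 h2 h3 h4; auto. Qed.
Lemma ipC u v : ip v u = conjc (ip u v).
Proof. by case: Hip => h1 h2 h3 h4; auto. Qed.
Lemma ip_ge0 v : 0 <= ip v v.
Proof. by case: Hip => h1 h2 h3 h4; auto. Qed.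
Lemma ip_eq0 v : ip v v = 0 -> v = 0.
Proof. by case: Hip => h1 h2 h3 h4; auto. Qed.

Lemma ip0l w : ip 0 w = 0.
Proof.
have := ipDZl 1 0 0 w; rewrite scaler0 addr0 mul1r => /eqP.
rewrite -subr_eq0 => /eqP h.
by move: h; rewrite opprD addrA subrr add0r => /eqP; rewrite oppr_eq0 => /eqP.
Qed.
Lemma ipDl u v w : ip (u + v) w = ip u w + ip v w.
Proof. by rewrite -[u]scale1r ipDZl mul1r scale1r. Qed.
Lemma ipZl a u w : ip (a *: u) w = a * ip u w.
Proof. by rewrite -[a *: u]addr0 ipDZl ip0l addr0. Qed.
Lemma ipNl u w : ip (- u) w = - ip u w.
Proof. by rewrite -scaleN1r ipZl mulN1r. Qed.
Lemma ipBl u v w : ip (u - v) w = ip u w - ip v w.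
Proof. by rewrite ipDl ipNl. Qed.
Lemma ip0r w : ip w 0 = 0.
Proof. by rewrite ipC ip0l conjc0. Qed.
Lemma ipDr u v w : ip w (u + v) = ip w u + ip w v.
Proof. by rewrite ipC ipDl rmorphD /= -!ipC. Qed.
Lemma ipZr a u w : ip w (a *: u) = conjc a * ip w u.
Proof. by rewrite ipC ipZl rmorphM /= -ipC. Qed.
Lemma ipNr u w : ip w (- u) = - ip w u.
Proof. by rewrite -scaleN1r ipZr rmorphN rmorph1 mulN1r. Qed.

Lemma ipnorm_ge0 v : 0 <= ipnorm ip v.
Proof. exact: sqrtr_ge0. Qed.

Lemma ip_self v : ip v v = ((ipnorm ip v) ^+ 2)%:C%C.
Proof.
have h := ip_ge0 v; rewrite /ipnorm sqr_sqrtr; last first.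
  by move: h; rewrite lecE /= => /andP[_].
move: h; case: (ip v v) => a b; rewrite lecE /= => /andP[/eqP -> _] //.
Qed.

Lemma ipnorm_eq0 {v} : ipnorm ip v = 0 -> v = 0.
Proof. by move=> h; apply: ip_eq0; rewrite ip_self h expr0n. Qed.

Lemma ipnorm_gt0 {v} : v != 0 -> 0 < ipnorm ip v.
Proof.
move=> nz; rewrite lt_neqAle ipnorm_ge0 andbT; apply/eqP => h.
by move: nz; rewrite (ipnorm_eq0 (esym h)) eqxx.
Qed.

Lemma ipnorm0 : ipnorm ip 0 = 0.
Proof. by rewrite /ipnorm ip0l /= sqrtr0. Qed.

End IP.


Section CS.
Context {R : realType}.
Local Notation C := R[i].

Lemma mul_conjc (r : C) : r * conjc r = ((cabs r) ^+ 2)%:C%C.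
Proof.
case: r => a b; rewrite /cabs /= sqr_sqrtr ?addr_ge0 ?sqr_ge0 //.
apply/eqP; rewrite eq_complex /=; apply/andP; split; apply/eqP; ring.
Qed.

Lemma conjc_divR (z : C) (t : R) : conjc (z / t%:C%C) = conjc z / t%:C%C.
Proof. rewrite rmorphM; change (conjc z * conjc ((t%:C%C)^-1) = conjc z / t%:C%C). by rewrite conjc_inv conjc_real. Qed.

Lemma cabs_ge0 (r : C) : 0 <= cabs r.
Proof. by case: r => a b; rewrite /cabs /= sqrtr_ge0. Qed.

Context {V : lmodType C} {ip : V -> V -> C}.
Hypothesis Hip : inner_product ip.

Lemma cauchy_schwarz x y : cabs (ip x y) <= ipnorm ip x * ipnorm ip y.
Proof.
have [->|ny] := eqVneq y 0.
  by rewrite ip0r // ipnorm0 // mulr0 /cabs /= expr0n /= addr0 sqrtr0.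
have qp := ipnorm_gt0 Hip ny.
set r := ip x y; set p := ipnorm ip x; set q := ipnorm ip y.
set l := - r / (q ^+ 2)%:C%C.
have h := ip_ge0 Hip (x + l *: y).
rewrite (ipDl Hip) !(ipDr Hip) !(ipZl Hip) !(ipZr Hip) (ipC Hip x y) !(ip_self Hip) -/p -/q -/r in h.
have Q0 : (q ^+ 2)%:C%C != 0 :> C.
  by rewrite (inj_eq (@complexI _)) expf_eq0 /= gt_eqF.
move: h; rewrite /l conjc_divR rmorphN /= divfK //.
have -> : forall P Q s, P + - s / Q * r + (- r / Q * s + - r / Q * - s) = P - r * s / Q.
  by move=> P Q s; ring.
rewrite mul_conjc -fmorphV -rmorphM -rmorphB /= ler0c subr_ge0 ler_pdivrMr ?exprn_gt0 // -exprMn => h.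
rewrite -(@ler_pXn2r _ 2) // nnegrE ?cabs_ge0 ?mulr_ge0 ?ipnorm_ge0 //.
Qed.
End CS.


Section Tri.
Context {R : realType}.
Local Notation C := R[i].

Lemma Re_le_cabs (r : C) : complex.Re r <= cabs r.
Proof.
case: r => a b; rewrite /cabs /=.
apply: (le_trans (ler_norm a)); rewrite -sqrtr_sqr.
by rewrite ler_sqrt ?addr_ge0 ?sqr_ge0 // lerDl sqr_ge0.
Qed.

Lemma cabsN (r : C) : cabs (- r) = cabs r.
Proof. exact: normcN. Qed.
Lemma cabsD (r s : C) : cabs (r + s) <= cabs r + cabs s.
Proof. exact: le_normcD. Qed.

Context {V : lmodType C} {ip : V -> V -> C}.
Hypothesis Hip : inner_product ip.

Lemma ipnormD x y : ipnorm ip (x + y) <= ipnorm ip x + ipnorm ip y.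
Proof.
have h := ip_self Hip (x + y).
rewrite (ipDl Hip) !(ipDr Hip) (ipC Hip x y) !(ip_self Hip) in h.
have h2 := congr1 (@complex.Re R) h.
rewrite /= !raddfD /= in h2.
have hr : complex.Re (ip x y) + complex.Re (conjc (ip x y)) <= 2 * (ipnorm ip x * ipnorm ip y).
  have -> : complex.Re (conjc (ip x y)) = complex.Re (ip x y) by case: (ip x y).
  have := le_trans (Re_le_cabs (ip x y)) (cauchy_schwarz Hip x y); lra.
rewrite -(@ler_pXn2r _ 2) // ?nnegrE ?addr_ge0 ?ipnorm_ge0 //.
lra.
Qed.

Lemma ipnormN x : ipnorm ip (- x) = ipnorm ip x.
Proof. by rewrite /ipnorm (ipNl Hip) (ipNr Hip) opprK. Qed.

Lemma ipnormB x y : ipnorm ip (x - y) <= ipnorm ip x + ipnorm ip y.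
Proof. by rewrite -(ipnormN y) ipnormD. Qed.
End Tri.


Section Op.
Context {R : realType}.
Local Notation C := R[i].
Context {V : lmodType C} {ip : V -> V -> C}.
Hypothesis Hip : inner_product ip.
Variable A : V -> V.
Hypothesis A0 : A 0 = 0.
Hypothesis AM : exists M : R, forall x, ipnorm ip (A x) <= M * ipnorm ip x.

Let S := [set ipnorm ip (A v) / ipnorm ip v | v in [set v : V | v != 0]].

Lemma opnorm_hub : has_ubound S.
Proof.
case: AM => M hM; exists M => _ [v /= vnz <-].
by rewrite ler_pdivrMr ?(ipnorm_gt0 Hip).
Qed.

Lemma opnorm_ge0 : 0 <= opnorm ip ip A.
Proof.
rewrite /opnorm -/S.
have [[v vnz]|nv] := pselect (exists v : V, v != 0).
  have h : S (ipnorm ip (A v) / ipnorm ip v) by exists v.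
  have h2 := ub_le_sup opnorm_hub h.
  apply: le_trans h2.
  by rewrite divr_ge0 ?ipnorm_ge0.
suff -> : S = set0 by rewrite sup0.
apply/seteqP; split => // _ [v /= vnz _]; apply: nv; by exists v.
Qed.

Lemma opnorm_le x : ipnorm ip (A x) <= opnorm ip ip A * ipnorm ip x.
Proof.
have [->|xnz] := eqVneq x 0.
  by rewrite A0 (ipnorm0 Hip) mulr0.
rewrite -ler_pdivrMr ?(ipnorm_gt0 Hip) //.
by apply: (ub_le_sup opnorm_hub); exists x.
Qed.
End Op.


Section Key.
Context {R : realType}.
Local Notation C := R[i].
Context {V0 : lmodType C} {ip0 : V0 -> V0 -> C}.
Hypothesis Hip0 : inner_product ip0.

Lemma diff_bounded {m1 m2 : {linear V0 -> V0}} :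
  bounded_op ip0 ip0 m1 -> bounded_op ip0 ip0 m2 ->
  exists M : R, forall x, ipnorm ip0 (m1 x - m2 x) <= M * ipnorm ip0 x.
Proof.
move=> [M1 h1] [M2 h2]; exists (M1 + M2) => x.
apply: le_trans (ipnormB Hip0 _ _) _.
by rewrite mulrDl lerD.
Qed.

Lemma diff_opnorm {m1 m2 : {linear V0 -> V0}} :
  bounded_op ip0 ip0 m1 -> bounded_op ip0 ip0 m2 ->
  0 <= opnorm ip0 ip0 (fun x => m1 x - m2 x) /\
  forall x, ipnorm ip0 (m1 x - m2 x) <= opnorm ip0 ip0 (fun x => m1 x - m2 x) * ipnorm ip0 x.
Proof.
move=> b1 b2; have hb := diff_bounded b1 b2.
have A0 : (fun x => m1 x - m2 x) 0 = 0.
  by rewrite /= !linear0 addr0.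
split; first exact: (opnorm_ge0 Hip0 _ hb).
by move=> x; apply: (opnorm_le Hip0 _ A0 hb).
Qed.

Context {V : lmodType C} {ip : V -> V -> C}.

Lemma key_ineq (iota D : {linear V -> V0}) (b : V -> V -> C)
  (mu1 mu2 e1 e2 : {linear V0 -> V0}) :
  (forall v : V, ipnorm ip0 (iota v) <= ipnorm ip v) ->
  (forall v : V, ipnorm ip0 (D v) <= ipnorm ip v) ->
  bounded_op ip0 ip0 mu1 -> bounded_op ip0 ip0 mu2 ->
  bounded_op ip0 ip0 e1 -> bounded_op ip0 ip0 e2 ->
  forall u v, cabs (aform ip0 iota D b mu1 e1 u v) <=
    cabs (aform ip0 iota D b mu2 e2 u v) +
    (opnorm ip0 ip0 (fun x => mu1 x - mu2 x) + opnorm ip0 ip0 (fun x => e1 x - e2 x))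
      * ipnorm ip u * ipnorm ip v.
Proof.
move=> hi hD bm1 bm2 be1 be2 u v.
have [n1p n1b] := diff_opnorm bm1 bm2.
have [n2p n2b] := diff_opnorm be1 be2.
set n1 := opnorm _ _ _ in n1p n1b *; set n2 := opnorm _ _ _ in n2p n2b *.
rewrite /aform.
rewrite (_ : ip0 (mu1 (D u)) (D v) + b u v - ip0 (e1 (iota u)) (iota v) =
  (ip0 (mu2 (D u)) (D v) + b u v - ip0 (e2 (iota u)) (iota v)) + (ip0 (mu1 (D u)) (D v) - ip0 (mu2 (D u)) (D v))
     - (ip0 (e1 (iota u)) (iota v) - ip0 (e2 (iota u)) (iota v))); last by ring.
rewrite -!(ipBl Hip0).
rewrite -addrA.
apply: le_trans; first exact: cabsD.
rewrite -addrA lerD2l.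
apply: le_trans; first exact: cabsD.
rewrite cabsN.
have hX := le_trans (cauchy_schwarz Hip0 _ _) (ler_wpM2r (ipnorm_ge0 _) (n1b (D u))).
have hY := le_trans (cauchy_schwarz Hip0 _ _) (ler_wpM2r (ipnorm_ge0 _) (n2b (iota u))).
apply: le_trans; first exact: (lerD (hX (D v)) (hY (iota v))).
have h1 : n1 * ipnorm ip0 (D u) * ipnorm ip0 (D v) <= n1 * (ipnorm ip u * ipnorm ip v).
  by rewrite -mulrA ler_wpM2l // ler_pM ?ipnorm_ge0.
have h2 : n2 * ipnorm ip0 (iota u) * ipnorm ip0 (iota v) <= n2 * (ipnorm ip u * ipnorm ip v).
  by rewrite -mulrA ler_wpM2l // ler_pM ?ipnorm_ge0.
apply: le_trans; first exact: (lerD h1 h2).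
by rewrite -mulrDl mulrA.
Qed.
End Key.


Section Span.
Context {R : realType}.
Local Notation C := R[i].
Context {V : lmodType C}.

Definition cspan (s : seq V) : set V :=
  [set v | exists c : 'I_(size s) -> C, v = \sum_(i < size s) c i *: s`_i].

Definition cfree (s : seq V) : Prop :=
  forall c : 'I_(size s) -> C, \sum_(i < size s) c i *: s`_i = 0 -> forall i, c i = 0.

Lemma span_cons x s v :
  cspan (x :: s) v <-> exists a w, cspan s w /\ v = a *: x + w.
Proof.
split.
  move=> [c ->]; rewrite /= big_ord_recl /=.
  exists (c ord0), (\sum_(i < size s) c (lift ord0 i) *: s`_i); split => //.
  by exists (fun i => c (lift ord0 i)).
move=> [a [w [[c ->] ->]]].
exists (fun i : 'I_(size s).+1 => if unlift ord0 i is Some j then c j else a).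
rewrite /= big_ord_recl /= unlift_none; congr (_ + _).
by apply: eq_bigr => i _; rewrite liftK.
Qed.

Lemma span0 s : cspan s 0.
Proof. by exists (fun _ => 0); rewrite big1 // => i _; rewrite scale0r. Qed.

Lemma span_lin s a u w : cspan s u -> cspan s w -> cspan s (a *: u + w).
Proof.
move=> [c ->] [d ->]; exists (fun i => a * c i + d i).
rewrite scaler_sumr -big_split /=; apply: eq_bigr => i _.
by rewrite scalerDl scalerA.
Qed.

Lemma span_nth s i : (i < size s)%N -> cspan s s`_i.
Proof.
move=> hi; exists (fun j : 'I_(size s) => if val j == i then 1 else 0).
rewrite (bigD1 (Ordinal hi)) //= eqxx scale1r big1 ?addr0 // => j hj.
have -> : (val j == i) = false.
  by apply/negbTE; apply: contra hj => /eqP h; apply/eqP/val_inj.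
by rewrite scale0r.
Qed.

Lemma basis_exists (s : seq V) : exists t : seq V, cspan t = cspan s /\ cfree t.
Proof.
elim: s => [|x s [t [ht ft]]].
  exists [::]; split => // c _ i; by case: i.
have [xin|xnin] := pselect (cspan t x).
  exists t; split => //.
  apply/seteqP; split => v.
    move=> vt; apply/span_cons; exists 0, v; split; first by move: vt; rewrite ht.
    by rewrite scale0r add0r.
  move=> /span_cons [a [w [ws ->]]]; apply: span_lin; first exact: xin.
  by rewrite -ht in ws.
exists (x :: t); split.
  apply/seteqP; split => v /span_cons [a [w [ws ->]]]; apply/span_cons; exists a, w;
    split => //; [by rewrite -ht | by rewrite ht].
move=> c; rewrite /= big_ord_recl /= => h.
have c0 : c ord0 = 0.
  apply/eqP; apply: contraT => nz; exfalso; apply: xnin.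
  have -> : x = (- (c ord0)^-1) *: (\sum_(i < size t) c (lift ord0 i) *: t`_i) + 0.
    rewrite addr0; apply: (scalerI nz); rewrite scalerA mulrN mulfV // scaleN1r.
    by apply/eqP; rewrite -addr_eq0 h.
  apply: span_lin; last exact: span0.
  by exists (fun i => c (lift ord0 i)).
rewrite c0 scale0r add0r in h.
have hl := ft _ h.
move=> i; case: (unliftP ord0 i) => [j ->|->] //.
Qed.
End Span.


Section Adj.
Context {R : realType}.
Local Notation C := R[i].
Context {V : lmodType C}.
Variable a : V -> V -> C.
Hypothesis lin1 : forall (al : C) u u' v, a (al *: u + u') v = al * a u v + a u' v.
Hypothesis lin2 : forall (al : C) u v v', a u (al *: v + v') = conjc al * a u v + a u v'.

Lemma a0l v : a 0 v = 0.
Proof.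
have := lin1 1 0 0 v; rewrite scaler0 addr0 mul1r => /eqP.
rewrite -subr_eq0 opprD addrA subrr add0r oppr_eq0 => /eqP //.
Qed.
Lemma a0r v : a v 0 = 0.
Proof.
have := lin2 1 v 0 0; rewrite scaler0 addr0 rmorph1 mul1r => /eqP.
rewrite -subr_eq0 opprD addrA subrr add0r oppr_eq0 => /eqP //.
Qed.

Lemma a_suml n (c : 'I_n -> C) (e : 'I_n -> V) w :
  a (\sum_(i < n) c i *: e i) w = \sum_(i < n) c i * a (e i) w.
Proof.
elim/big_rec2: _ => [|i y1 y2 _ <-]; first exact: a0l.
by rewrite lin1.
Qed.

Lemma a_sumr n (c : 'I_n -> C) (e : 'I_n -> V) w :
  a w (\sum_(i < n) c i *: e i) = \sum_(i < n) conjc (c i) * a w (e i).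
Proof.
elim/big_rec2: _ => [|i y1 y2 _ <-]; first exact: a0r.
by rewrite lin2.
Qed.

Lemma findim_adjoint (t : seq V) : cfree t ->
  (forall u, cspan t u -> u != 0 -> exists v, cspan t v /\ a u v != 0) ->
  forall v, cspan t v -> v != 0 -> exists u, cspan t u /\ a u v != 0.
Proof.
move=> ft hinf v vt vnz.
apply: contrapT; move=> hno.
have hall : forall u, cspan t u -> a u v = 0.
  move=> u ut; have [//|nz] := eqVneq (a u v) 0; exfalso; apply: hno; by exists u.
set n := size t.
pose M : 'M[C]_n := \matrix_(i, j) a t`_i t`_j.
have Mu : M \in unitmx.
  rewrite -row_free_unit -kermx_eq0; apply/rowV0P => w /sub_kermxP wM.
  set u := \sum_(i < n) w 0 i *: t`_i.
  have ut : cspan t u by exists (fun i => w 0 i).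
  have auj : forall j : 'I_n, a u t`_j = 0.
    move=> j; rewrite /u a_suml.
    transitivity ((w *m M) 0 j); last by rewrite wM mxE.
    by rewrite mxE; apply: eq_bigr => i _; rewrite mxE.
  have u0 : u = 0.
    apply: contrapT => /eqP unz; have [v' [[d ->] nz]] := hinf u ut unz.
    by move: nz; rewrite a_sumr big1 ?eqxx // => j _; rewrite auj mulr0.
  have := ft (fun i => w 0 i) u0 => hw.
  by apply/matrixP => i j; rewrite mxE (ord1 i) hw.
case: vt => d vd.
pose x : 'cV[C]_n := \col_j conjc (d j).
have Mx : M *m x = 0.
  apply/matrixP => i j; rewrite !mxE.
  transitivity (a t`_i v); last exact: (hall t`_i (@span_nth _ _ t i (ltn_ord i))).
  by rewrite vd a_sumr; apply: eq_bigr => k _; rewrite !mxE mulrC.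
have x0 : x = 0 by rewrite -(mulKmx Mu x) Mx mulmx0.
move/eqP: vnz; apply; rewrite vd big1 // => j _.
have := congr1 (fun m : 'cV[C]_n => m j 0) x0; rewrite !mxE => /eqP.
by rewrite conjc_eq0 => /eqP ->; rewrite scale0r.
Qed.
End Adj.


Section AF.
Context {R : realType}.
Local Notation C := R[i].
Context {V0 : lmodType C} {ip0 : V0 -> V0 -> C}.
Hypothesis Hip0 : inner_product ip0.
Context {V : lmodType C} {ip : V -> V -> C}.
Variables (iota D : {linear V -> V0}) (b : V -> V -> C) (mu eps : {linear V0 -> V0}).
Hypothesis Hb : cont_sesquilinear ip b.

Lemma aform_lin1 (al : C) u u' v :
  aform ip0 iota D b mu eps (al *: u + u') v =
  al * aform ip0 iota D b mu eps u v + aform ip0 iota D b mu eps u' v.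
Proof.
case: Hb => hb1 _ _; rewrite /aform !linearP /= hb1 !(ipDZl Hip0).
ring.
Qed.

Lemma aform_lin2 (al : C) u v v' :
  aform ip0 iota D b mu eps u (al *: v + v') =
  conjc al * aform ip0 iota D b mu eps u v + aform ip0 iota D b mu eps u v'.
Proof.
case: Hb => _ hb2 _; rewrite /aform !linearP /= hb2 !(ipDr Hip0) !(ipZr Hip0).
ring.
Qed.
End AF.

Lemma cabs_eq0 {R : realType} (z : R[i]) : cabs z = 0 -> z = 0.
Proof. exact: Normc.eq0_normc. Qed.

Theorem lemma5p4 (R : realType)
  (V : lmodType R[i]) (ip : V -> V -> R[i])
  (V0 : lmodType R[i]) (ip0 : V0 -> V0 -> R[i])
  (iota : {linear V -> V0})
  (D : {linear V -> V0}) (b : V -> V -> R[i])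
  (mu1inv mu2inv eps1 eps2 : {linear V0 -> V0})
  (CG11 CG21 CG12 CG22 : R)
  (HN : set V) (Cdis : R) :
  hilbert ip -> hilbert ip0 ->
  injective iota ->
  (forall v : V, ipnorm ip0 (iota v) <= ipnorm ip v) ->
  (forall v : V, ipnorm ip0 (D v) <= ipnorm ip v) ->
  cont_sesquilinear ip b ->
  bounded_op ip0 ip0 mu1inv -> bounded_op ip0 ip0 mu2inv ->
  bounded_op ip0 ip0 eps1 -> bounded_op ip0 ip0 eps2 ->
  0 < CG11 -> 0 < CG21 ->
  (forall v : V, CG11 * ipnorm ip v ^+ 2 <=
     cabs (aform ip0 iota D b mu1inv eps1 v v + rC (CG21 * ipnorm ip0 (iota v) ^+ 2))) ->
  0 < CG12 -> 0 < CG22 ->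
  (forall v : V, CG12 * ipnorm ip v ^+ 2 <=
     cabs (aform ip0 iota D b mu2inv eps2 v v + rC (CG22 * ipnorm ip0 (iota v) ^+ 2))) ->
  findim_subspace HN ->
  0 < Cdis ->
  ((Cdis^-1)%:E <= infsup ip HN (aform ip0 iota D b mu1inv eps1))%E ->
  adjoint_nondeg HN (aform ip0 iota D b mu1inv eps1) ->
  (opnorm ip0 ip0 (fun x => mu1inv x - mu2inv x)
     + opnorm ip0 ip0 (fun x => eps1 x - eps2 x)) * Cdis <= 2^-1 ->
  ((2 * Cdis)^-1%:E <= infsup ip HN (aform ip0 iota D b mu2inv eps2))%E /\
  adjoint_nondeg HN (aform ip0 iota D b mu2inv eps2).
Proof.
move=> [Hip _] [Hip0 _] _ hi hD Hb bm1 bm2 be1 be2 _ _ _ _ _ _ hfin Cp Hinf _ hc.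
set a1 := aform ip0 iota D b mu1inv eps1.
set a2 := aform ip0 iota D b mu2inv eps2.
have key := key_ineq Hip0 (ip := ip) iota D b mu1inv mu2inv eps1 eps2 hi hD bm1 bm2 be1 be2.
have [n1p _] := diff_opnorm Hip0 bm1 bm2.
have [n2p _] := diff_opnorm Hip0 be1 be2.
set c := opnorm _ _ _ + opnorm _ _ _ in hc key.
have cp : 0 <= c by rewrite addr_ge0.
have cle : c <= 2^-1 / Cdis by rewrite ler_pdivlMr.
have hu : forall u, nonzero_in HN u ->
  ((2 * Cdis)^-1%:E <= ereal_sup [set (cabs (a2 u v) / (ipnorm ip u * ipnorm ip v))%:E
                                 | v in nonzero_in HN])%E.
  move=> u hu.
  have h1 := le_trans Hinf (ereal_inf_lbound (ex_intro2 _ _ u hu erefl)).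
  set S2 := ereal_sup _.
  have h2 : (ereal_sup [set (cabs (a1 u v) / (ipnorm ip u * ipnorm ip v))%:E
                        | v in nonzero_in HN] <= S2 + c%:E)%E.
    apply: ge_ereal_sup => _ [v hv <-].
    have pp : 0 < ipnorm ip u * ipnorm ip v.
      by rewrite mulr_gt0 // (ipnorm_gt0 Hip) //; [case: hu | case: hv].
    have hr : cabs (a1 u v) / (ipnorm ip u * ipnorm ip v) <=
              cabs (a2 u v) / (ipnorm ip u * ipnorm ip v) + c.
      by rewrite ler_pdivrMr // mulrDl divfK ?gt_eqF // mulrA key.
    apply: (@le_trans _ _ ((cabs (a2 u v) / (ipnorm ip u * ipnorm ip v) + c)%:E)).
      by rewrite lee_fin.
    rewrite EFinD; apply: leeD => //.
    by apply: ereal_sup_ubound; exists v.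
  have h3 := le_trans h1 h2.
  move: h3; clear h1 h2; rewrite /S2; case: (ereal_sup _) => [r| |] //=.
    rewrite -EFinD !lee_fin => h3.
    have -> : (2 * Cdis)^-1 = Cdis^-1 - 2^-1 / Cdis.
      by field; rewrite gt_eqF.
    by rewrite lerBlDr (le_trans h3) // lerD2l.
  by move=> _; rewrite leey.
split.
  by apply: le_ereal_inf_tmp => _ [u hu' <-]; exact: hu.
move=> v hv.
case: hfin => s Hs; have [t [ht ft]] := basis_exists s.
have HNt : HN = cspan t by rewrite ht Hs.
have lin1 := aform_lin1 Hip0 iota D b mu2inv eps2 Hb.
have lin2 := aform_lin2 Hip0 iota D b mu2inv eps2 Hb.
have hinf : forall u, cspan t u -> u != 0 -> exists v, cspan t v /\ a2 u v != 0.
  move=> u ut unz.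
  have hu' := hu u (conj (eq_ind_r (fun X => X u) ut HNt) unz).
  have : (0%:E < ereal_sup [set (cabs (a2 u v) / (ipnorm ip u * ipnorm ip v))%:E
                                 | v in nonzero_in HN])%E.
    apply: lt_le_trans hu'; rewrite lte_fin invr_gt0 mulr_gt0 //.
  move=> /ereal_sup_gt [_ [w hw <-]] pos; exists w; split.
    by case: hw; rewrite HNt.
  apply/eqP => a0; move: pos; rewrite a0 /cabs Normc.normc0 mul0r ltxx //.
case: hv => hvN vnz.
have [u [ut au]] := @findim_adjoint _ _ a2 lin1 lin2 t ft hinf v (eq_ind _ (fun X => X v) hvN _ HNt) vnz.
have unz : u != 0.
  apply/eqP => u0; move: au; rewrite u0 (@a0l _ _ a2 lin1) eqxx //.
have hS : [set (cabs (a2 u0 v))%:E | u0 in nonzero_in HN] (cabs (a2 u v))%:E.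
  by exists u => //; split => //; rewrite HNt.
apply: lt_le_trans (ereal_sup_ubound hS).
rewrite lte_fin lt_neqAle cabs_ge0 andbT; apply/eqP => /esym /cabs_eq0 h.
by rewrite h eqxx in au.
Qed.
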